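(* For $\rho \in [-1,1]$ define $C_\rho:[0,1]^2\to[0,1]$ by: if $u \in \{0,1\}$ or $v\in\{0,1\}$, $C_\rho(u,v)=uv$; and for $u,v\in(0,1)$, $$C_\rho(u,v) = \begin{cases} W(u,v) & \text{if } \rho \le \underline{\rho}_{uv},\\ M(u,v) & \text{if } \rho \ge \overline{\rho}_{uv},\\ uv + \rho\sqrt{u(1-u)v(1-v)} & \text{otherwise},\end{cases}$$ where $W(u,v)=\max(u+v-1,0)$, $M(u,v)=\min(u,v)$, $\underline{\rho}_{uv} = \frac{\max(u+v-1,0)-uv}{\sqrt{u(1-u)v(1-v)}}$ and $\overline{\rho}_{uv} = \frac{\min(u,v)-uv}{\sqrt{u(1-u)v(1-v)}}$. Then for every $\rho\in[-1,1]$, $C_\rho$ is a bivariate copula, i.e. (i) $C_\rho(0,v)=C_\rho(u,0)=0$, (ii) $C_\rho(u,1)=u$ and $C_\rho(1,v)=v$, and (iii) $C_\rho(u_2,v_2)-C_\rho(u_2,v_1)-C_\rho(u_1,v_2)+C_\rho(u_1,v_1)\ge 0$ for all $0\le u_1\le u_2\le 1$, $0\le v_1\le v_2\le1$. Moreover $C_{-1}=W$, $C_0(u,v)=uv$ and $C_1=M$ on $[0,1]^2$.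
   Context: $C_\rho$ is called the correlated \emph{and} operator: for events with probabilities $u,v$ and Pearson correlation $\rho$ it gives the probability of their conjunction, clamped to the Fréchet bounds $W$ and $M$. *)

(* Defs.v *)
From Stdlib Require Import Reals.
Open Scope R_scope.

Definition W (u v : R) : R := Rmax (u + v - 1) 0.
Definition M (u v : R) : R := Rmin u v.

Definition sd (u v : R) : R := sqrt (u * (1 - u) * v * (1 - v)).

Definition rho_lo (u v : R) : R := (Rmax (u + v - 1) 0 - u * v) / sd u v.
Definition rho_hi (u v : R) : R := (Rmin u v - u * v) / sd u v.

Definition Crho (rho u v : R) : R :=
  if Req_EM_T u 0 then u * v else
  if Req_EM_T u 1 then u * v else
  if Req_EM_T v 0 then u * v else
  if Req_EM_T v 1 then u * v else
  if Rle_dec rho (rho_lo u v) then W u v else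
  if Rle_dec (rho_hi u v) rho then M u v else
  u * v + rho * sd u v.

Definition is_copula (Cf : R -> R -> R) : Prop :=
  (forall v, 0 <= v <= 1 -> Cf 0 v = 0) /\
  (forall u, 0 <= u <= 1 -> Cf u 0 = 0) /\
  (forall u, 0 <= u <= 1 -> Cf u 1 = u) /\
  (forall v, 0 <= v <= 1 -> Cf 1 v = v) /\
  (forall u1 u2 v1 v2, 0 <= u1 -> u1 <= u2 -> u2 <= 1 ->
     0 <= v1 -> v1 <= v2 -> v2 <= 1 ->
     Cf u2 v2 - Cf u2 v1 - Cf u1 v2 + Cf u1 v1 >= 0).

(* Main.v *)
Require Import Defs.
From Stdlib Require Import Reals Lra Psatz.
Open Scope R_scope.

Definition mono (f : R -> R) a b :=
  forall s t, a <= s -> s <= t -> t <= b -> f s <= f t.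

Lemma mono_glue f a b c : mono f a b -> mono f b c -> mono f a c.
Proof.
  intros H1 H2 s t Has Hst Htc.
  destruct (Rle_dec t b).
  - apply H1; lra.
  - destruct (Rle_dec b s).
    + apply H2; lra.
    + apply Rle_trans with (f b); [apply H1|apply H2]; lra.
Qed.

Definition psi A B x := (A*x^2 + B*x)/(1+x^2).

Lemma divpos a b : 0 <= a -> 0 < b -> 0 <= a / b.
Proof. intros; unfold Rdiv; apply Rmult_le_pos; [lra|left; apply Rinv_0_lt_compat; lra]. Qed.

Lemma sq_pos1 x : 0 < 1 + x^2.
Proof. nra. Qed.

Lemma psi_diff A B s t : psi A B t - psi A B s =
  (t-s)*(A*(s+t) + B*(1-s*t))/((1+s^2)*(1+t^2)).
Proof. unfold psi. field. split; generalize (sq_pos1 s) (sq_pos1 t); lra. Qed.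

Lemma piece_mono F A B E p q :
  (forall x, p <= x -> x <= q -> F x = psi A B x + E) ->
  (forall s t, p <= s -> s <= t -> t <= q -> 0 <= A*(s+t) + B*(1-s*t)) ->
  mono F p q.
Proof.
  intros HF HC s t H1 H2 H3.
  rewrite (HF s) by lra. rewrite (HF t) by lra.
  assert (0 <= psi A B t - psi A B s).
  { rewrite psi_diff. apply divpos.
    - apply Rmult_le_pos; [lra| apply HC; lra].
    - generalize (sq_pos1 s) (sq_pos1 t); nra. }
  lra.
Qed.

Definition K r x y := Rmin (Rmin (x^2) (y^2)) (r*x*y).
Definition Ch r x y := (x^2*y^2 + K r x y)/((1+x^2)*(1+y^2)).

Section Core.
Variables (r y1 y2 : R).
Hypotheses (Hr0 : 0 < r) (Hr1 : r <= 1) (Hy1 : 0 <= y1) (Hy12 : y1 <= y2).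

Lemma Klo x y : 0 <= x -> 0 <= y -> x <= r*y -> K r x y = x^2.
Proof.
  intros. assert (r*y <= 1*y) by (apply Rmult_le_compat_r; lra). assert (x <= y) by lra. unfold K. rewrite (Rmin_left (x^2) (y^2)) by nra. apply Rmin_left.
  assert (x*x <= x*(r*y)) by (apply Rmult_le_compat_l; lra). nra.
Qed.
Lemma Kmid x y : 0 <= x -> 0 <= y -> r*y <= x -> r*x <= y -> K r x y = r*x*y.
Proof.
  intros. assert (x*(r*y) <= x*x) by (apply Rmult_le_compat_l; lra).
  assert (y*(r*x) <= y*y) by (apply Rmult_le_compat_l; lra).
  unfold K. apply Rmin_right. apply Rmin_glb; nra.
Qed.
Lemma Khi x y : 0 <= x -> 0 <= y -> y <= r*x -> K r x y = y^2.
Proof.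
  intros. assert (r*x <= 1*x) by (apply Rmult_le_compat_r; lra). assert (y <= x) by lra. unfold K. rewrite (Rmin_right (x^2) (y^2)) by nra. apply Rmin_left.
  assert (y*y <= y*(r*x)) by (apply Rmult_le_compat_l; lra). nra.
Qed.

Lemma le_div_l x y : x <= y / r -> r * x <= y.
Proof.
  intros H. apply Rmult_le_compat_l with (r:=r) in H; [|lra].
  replace (r*(y/r)) with y in H by (field; lra). exact H.
Qed.
Lemma ge_div_l x y : y / r <= x -> y <= r * x.
Proof.
  intros H. apply Rmult_le_compat_l with (r:=r) in H; [|lra].
  replace (r*(y/r)) with y in H by (field; lra). exact H.
Qed.

Lemma le_div_r x y : r * x <= y -> x <= y / r.
Proof.
  intros H. replace x with ((r*x)/r) by (field; lra).
  unfold Rdiv; apply Rmult_le_compat_r; [left; apply Rinv_0_lt_compat; lra|lra].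
Qed.

Definition F x := Ch r x y2 - Ch r x y1.

Lemma y1r : 0 <= y1 / r.
Proof. apply divpos; lra. Qed.
Lemma b12 : y1 / r <= y2 / r.
Proof. unfold Rdiv; apply Rmult_le_compat_r; [left; apply Rinv_0_lt_compat|]; lra. Qed.
Lemma ab1 : r*y1 <= y1 / r.
Proof. apply le_div_r. assert (r*r <= 1) by nra.
  assert ((r*r)*y1 <= 1*y1) by (apply Rmult_le_compat_r; lra). nra. Qed.
Lemma ab2 : r*y2 <= y2 / r.
Proof. apply le_div_r. assert (r*r <= 1) by nra.
  assert ((r*r)*y2 <= 1*y2) by (apply Rmult_le_compat_r; lra). nra. Qed.

Ltac dpos := generalize (sq_pos1 y1) (sq_pos1 y2); intros.

Lemma P1 : mono F 0 (r*y1).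
Proof.
  apply piece_mono with 0 0 0.
  - intros x H1 H2. unfold F, Ch, psi. rewrite !Klo by nra.
    dpos. field. generalize (sq_pos1 x); lra.
  - intros; lra.
Qed.

Lemma P2 : mono F (r*y1) (Rmin (r*y2) (y1/r)).
Proof.
  apply piece_mono with (1/(1+y1^2)) (-r*y1/(1+y1^2)) 0.
  - intros x H1 H2.
    assert (x <= r*y2) by (eapply Rle_trans; [apply H2| apply Rmin_l]).
    assert (r*x <= y1) by (apply le_div_l; eapply Rle_trans; [apply H2| apply Rmin_r]).
    unfold F, Ch, psi. rewrite Klo by nra. rewrite Kmid by nra.
    dpos. field. generalize (sq_pos1 x); lra.
  - intros s t H1 H2 H3. dpos.
    replace (1 / (1 + y1 ^ 2) * (s + t) + - r * y1 / (1 + y1 ^ 2) * (1 - s * t))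
      with (((s+t) - r*y1*(1-s*t))/(1+y1^2)) by (field; lra).
    apply divpos; [|lra].
    assert (0 <= r*y1) by nra. assert (0 <= r*y1*(s*t)) by (apply Rmult_le_pos; nra).
    nra.
Qed.

Lemma P3a : r*y2 <= y1/r -> mono F (r*y2) (y1/r).
Proof.
  intros Hab.
  apply piece_mono with (y2^2/(1+y2^2) - y1^2/(1+y1^2))
    (r*(y2/(1+y2^2) - y1/(1+y1^2))) 0.
  - intros x H1 H2. apply le_div_l in H2.
    unfold F, Ch, psi. rewrite !Kmid by nra.
    dpos. field. generalize (sq_pos1 x); lra.
  - intros s t H1 H2 H3. dpos. apply le_div_l in H3.
    replace ((y2 ^ 2 / (1 + y2 ^ 2) - y1 ^ 2 / (1 + y1 ^ 2)) * (s + t) +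
       r * (y2 / (1 + y2 ^ 2) - y1 / (1 + y1 ^ 2)) * (1 - s * t))
      with ((y2-y1)*((y1+y2)*(s+t) + r*(1-y1*y2)*(1-s*t))/((1+y1^2)*(1+y2^2)))
      by (field; lra).
    apply divpos; [|nra].
    apply Rmult_le_pos; [lra|].
    assert (Hs: 0 <= s) by nra.
    assert (0 <= y1*y2) by nra. assert (0 <= s*t) by nra.
    assert (0 <= (y1+y2)*(s+t)) by nra.
    destruct (Rle_dec (y1*y2) 1); destruct (Rle_dec (s*t) 1).
    + assert (0 <= (1-y1*y2)*(1-s*t)) by nra. nra.
    +
      assert ((1-y1*y2)*(s*t-1) <= s*t) by nra.
      assert (r*(s*t) <= y1*t) by nra.
      assert (y1*t <= (y1+y2)*(s+t)) by nra.
      nra.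
    + assert ((y1*y2-1)*(1-s*t) <= y1*y2) by nra.
      assert (r*(y1*y2) <= y1*s) by nra.
      assert (y1*s <= (y1+y2)*(s+t)) by nra.
      nra.
    + assert (0 <= (y1*y2-1)*(s*t-1)) by nra. nra.
Qed.

Lemma P3b : y1/r <= r*y2 -> mono F (y1/r) (r*y2).
Proof.
  intros Hab.
  apply piece_mono with 1 0 (- (y1^2/(1+y1^2))).
  - intros x H1 H2. assert (0 <= x) by (generalize y1r; lra). apply ge_div_l in H1.
    unfold F, Ch, psi. rewrite (Klo x y2) by nra. rewrite Khi by nra.
    dpos. field. generalize (sq_pos1 x); lra.
  - intros s t H1 H2 H3. generalize y1r; intros. nra.
Qed.

Lemma P4 : mono F (Rmax (r*y2) (y1/r)) (y2/r).
Proof.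
  apply piece_mono with (y2^2/(1+y2^2)) (r*y2/(1+y2^2)) (- (y1^2/(1+y1^2))).
  - intros x H1 H2. apply le_div_l in H2.
    assert (r*y2 <= x) by (eapply Rle_trans; [apply Rmax_l|apply H1]).
    assert (y1 <= r*x) by (apply ge_div_l; eapply Rle_trans; [apply Rmax_r|apply H1]).
    assert (0 <= r*y2) by (apply Rmult_le_pos; lra).
    unfold F, Ch, psi. rewrite (Khi x y1) by nra. rewrite Kmid by nra.
    dpos. field. generalize (sq_pos1 x); lra.
  - intros s t H1 H2 H3. dpos. apply le_div_l in H3.
    assert (r*y2 <= s) by (eapply Rle_trans; [apply Rmax_l|apply H1]).
    replace (y2 ^ 2 / (1 + y2 ^ 2) * (s + t) + r * y2 / (1 + y2 ^ 2) * (1 - s * t))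
      with ((y2^2*(s+t) + r*y2*(1-s*t))/(1+y2^2)) by (field; lra).
    apply divpos; [|lra].
    assert (0 <= s) by nra.
    assert (r*t*(y2*s) <= y2*(y2*s)) by (apply Rmult_le_compat_r; nra).
    nra.
Qed.

Lemma Ftop x : y2 / r <= x -> F x = y2^2/(1+y2^2) - y1^2/(1+y1^2).
Proof.
  intros H. generalize b12 y1r; intros.
  assert (y2 <= r*x) by (apply ge_div_l; lra).
  assert (y1 <= r*x) by (apply ge_div_l; lra).
  assert (0 <= x) by lra.
  unfold F, Ch. rewrite !Khi by nra.
  dpos. field. generalize (sq_pos1 x); lra.
Qed.

Lemma P5 T : mono F (y2/r) T.
Proof.
  intros s t H1 H2 H3. rewrite !Ftop by lra. lra.
Qed.

Lemma Fmono_T T : y2/r <= T -> mono F 0 T.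
Proof.
  intros HT.
  generalize ab1 ab2 b12 y1r; intros.
  apply mono_glue with (r*y1); [apply P1|].
  apply mono_glue with (Rmin (r*y2) (y1/r)); [apply P2|].
  apply mono_glue with (Rmax (r*y2) (y1/r)).
  - destruct (Rle_dec (r*y2) (y1/r)).
    + rewrite Rmin_left, Rmax_right by lra. apply P3a; lra.
    + rewrite Rmin_right, Rmax_left by lra. apply P3b; lra.
  - apply mono_glue with (y2/r); [apply P4| apply P5].
Qed.

Lemma Fmono s t : 0 <= s -> s <= t -> F s <= F t.
Proof.
  intros. apply (Fmono_T (Rmax t (y2/r))); [apply Rmax_r|lra|lra|apply Rmax_l].
Qed.

Lemma Fbound s : 0 <= s -> F s <= y2^2/(1+y2^2) - y1^2/(1+y1^2).
Proof.
  intros. rewrite <- (Ftop (Rmax s (y2/r))) by apply Rmax_r.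
  apply Fmono; [lra|apply Rmax_l].
Qed.
End Core.
Lemma Rmin_plus c a b : Rmin (c+a) (c+b) = c + Rmin a b.
Proof. unfold Rmin; destruct (Rle_dec (c+a) (c+b)), (Rle_dec a b); lra. Qed.

Lemma Rmin_div a b D : 0 < D -> Rmin (a/D) (b/D) = Rmin a b / D.
Proof.
  intros HD. unfold Rmin.
  destruct (Rle_dec (a/D) (b/D)) as [h1|h1], (Rle_dec a b) as [h2|h2]; try reflexivity; exfalso.
  - apply h2. replace a with ((a/D)*D) by (field; lra). replace b with ((b/D)*D) by (field; lra).
    apply Rmult_le_compat_r; lra.
  - apply h1. unfold Rdiv. apply Rmult_le_compat_r; [left; apply Rinv_0_lt_compat|]; lra.
Qed.

Definition Cp r u v := Rmin (M u v) (u*v + r*sd u v).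

Lemma Cp_Ch r x y : 0 <= x -> 0 <= y ->
  Cp r (x^2/(1+x^2)) (y^2/(1+y^2)) = Ch r x y.
Proof.
  intros Hx Hy. generalize (sq_pos1 x) (sq_pos1 y); intros.
  assert (HD : 0 < (1+x^2)*(1+y^2)) by nra.
  unfold Cp, M, sd, Ch, K.
  replace (x ^ 2 / (1 + x ^ 2) * (1 - x ^ 2 / (1 + x ^ 2)) * (y ^ 2 / (1 + y ^ 2)) *
       (1 - y ^ 2 / (1 + y ^ 2))) with ((x*y/((1+x^2)*(1+y^2)))^2) by (field; lra).
  rewrite sqrt_pow2 by (apply divpos; nra).
  replace (x ^ 2 / (1 + x ^ 2) * (y ^ 2 / (1 + y ^ 2)) + r * (x * y / ((1 + x ^ 2) * (1 + y ^ 2))))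
    with ((x^2*y^2 + r*x*y)/((1+x^2)*(1+y^2))) by (field; lra).
  replace (x ^ 2 / (1 + x ^ 2)) with ((x^2*y^2 + x^2)/((1+x^2)*(1+y^2))) by (field; lra).
  replace (y ^ 2 / (1 + y ^ 2)) with ((x^2*y^2 + y^2)/((1+x^2)*(1+y^2))) by (field; lra).
  rewrite !Rmin_div by lra. rewrite !Rmin_plus. reflexivity.
Qed.

Definition X u := sqrt (u/(1-u)).

Lemma X_prop u : 0 <= u < 1 -> 0 <= X u /\ u = (X u)^2/(1+(X u)^2).
Proof.
  intros H. assert (0 <= u/(1-u)) by (apply divpos; lra).
  split; [apply sqrt_pos|]. unfold X. rewrite pow2_sqrt by lra. field. lra.
Qed.

Lemma X_mono u1 u2 : 0 <= u1 -> u1 <= u2 -> u2 < 1 -> X u1 <= X u2.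
Proof.
  intros. unfold X. apply sqrt_le_1_alt.
  assert (0 <= u2/(1-u2) - u1/(1-u1)).
  { replace (u2/(1-u2) - u1/(1-u1)) with ((u2-u1)/((1-u1)*(1-u2))) by (field; lra).
    apply divpos; nra. }
  lra.
Qed.

Lemma Cp_X r u v : 0 <= u < 1 -> 0 <= v < 1 -> Cp r u v = Ch r (X u) (X v).
Proof.
  intros Hu Hv. destruct (X_prop u Hu) as [Hx Ex]. destruct (X_prop v Hv) as [Hy Ey].
  remember (X u) as x. remember (X v) as y.
  rewrite Ex, Ey. apply Cp_Ch; assumption.
Qed.

Lemma sd_zero_u0 v : sd 0 v = 0.
Proof. unfold sd. replace (0 * (1 - 0) * v * (1 - v)) with 0 by ring. apply sqrt_0. Qed.
Lemma sd_zero_u1 v : sd 1 v = 0.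
Proof. unfold sd. replace (1 * (1 - 1) * v * (1 - v)) with 0 by ring. apply sqrt_0. Qed.
Lemma sd_zero_v0 u : sd u 0 = 0.
Proof. unfold sd. replace (u * (1 - u) * 0 * (1 - 0)) with 0 by ring. apply sqrt_0. Qed.
Lemma sd_zero_v1 u : sd u 1 = 0.
Proof. unfold sd. replace (u * (1 - u) * 1 * (1 - 1)) with 0 by ring. apply sqrt_0. Qed.

Lemma Cp_ab r a b : 0 <= a <= 1 -> 0 <= b <= 1 -> sd a b = 0 -> Cp r a b = a*b.
Proof.
  intros Ha Hb H. unfold Cp. rewrite H, Rmult_0_r, Rplus_0_r.
  apply Rmin_right. unfold M. apply Rmin_glb; nra.
Qed.

Lemma Cp_1 r v : 0 <= v <= 1 -> Cp r 1 v = v.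
Proof. intros. rewrite Cp_ab; [ring|lra|lra|apply sd_zero_u1]. Qed.

Lemma Cp0 u v : 0 <= u <= 1 -> 0 <= v <= 1 -> Cp 0 u v = u*v.
Proof.
  intros. unfold Cp. rewrite Rmult_0_l, Rplus_0_r. apply Rmin_right. unfold M. apply Rmin_glb; nra.
Qed.

Lemma Cp_sym r u v : Cp r u v = Cp r v u.
Proof.
  unfold Cp, M, sd. rewrite (Rmin_comm v u).
  replace (v * (1 - v) * u * (1 - u)) with (u * (1 - u) * v * (1 - v)) by ring.
  rewrite (Rmult_comm v u). reflexivity.
Qed.

Lemma Cp_geW r u v : 0 <= r -> 0 <= u <= 1 -> 0 <= v <= 1 -> u + v - 1 <= Cp r u v.
Proof.
  intros. unfold Cp, M. apply Rmin_glb; [apply Rmin_glb; lra|].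
  assert (0 <= r*sd u v) by (apply Rmult_le_pos; [lra|apply sqrt_pos]). nra.
Qed.

Lemma rectCp_v r u1 u2 v1 v2 : 0 < r <= 1 -> 0 <= u1 -> u1 <= u2 -> u2 <= 1 ->
  0 <= v1 -> v1 <= v2 -> v2 < 1 ->
  Cp r u2 v2 - Cp r u2 v1 - Cp r u1 v2 + Cp r u1 v1 >= 0.
Proof.
  intros Hr H1 H2 H3 H4 H5 H6.
  assert (HX1 := X_prop v1 ltac:(lra)). assert (HX2 := X_prop v2 ltac:(lra)).
  assert (Hm := X_mono v1 v2 H4 H5 H6).
  destruct (Rlt_dec u2 1).
  - rewrite !Cp_X by lra.
    assert (HF := Fmono r (X v1) (X v2) ltac:(lra) ltac:(lra) ltac:(lra) Hm
                   (X u1) (X u2) ltac:(apply (X_prop u1); lra) ltac:(apply X_mono; lra)).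
    unfold F in HF. lra.
  - assert (u2 = 1) by lra. subst u2. rewrite !Cp_1 by lra.
    destruct (Rlt_dec u1 1).
    + rewrite !Cp_X by lra.
      assert (HF := Fbound r (X v1) (X v2) ltac:(lra) ltac:(lra) ltac:(lra) Hm
                   (X u1) ltac:(apply (X_prop u1); lra)).
      unfold F in HF. destruct HX1 as [_ E1]. destruct HX2 as [_ E2].
      rewrite <- E1, <- E2 in HF. lra.
    + assert (u1 = 1) by lra. subst u1. rewrite !Cp_1 by lra. lra.
Qed.

Lemma rectCp r u1 u2 v1 v2 : 0 <= r <= 1 -> 0 <= u1 -> u1 <= u2 -> u2 <= 1 ->
  0 <= v1 -> v1 <= v2 -> v2 <= 1 ->
  Cp r u2 v2 - Cp r u2 v1 - Cp r u1 v2 + Cp r u1 v1 >= 0.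
Proof.
  intros Hr H1 H2 H3 H4 H5 H6.
  destruct (Req_dec r 0) as [E|E].
  - subst r. rewrite !Cp0 by lra. nra.
  - destruct (Rlt_dec v2 1). { apply rectCp_v; lra. }
    destruct (Rlt_dec u2 1).
    + rewrite (Cp_sym r u2 v2), (Cp_sym r u2 v1), (Cp_sym r u1 v2), (Cp_sym r u1 v1).
      assert (HH := rectCp_v r v1 v2 u1 u2 ltac:(lra) H4 H5 H6 H1 H2 r0). lra.
    + assert (u2 = 1) by lra. assert (v2 = 1) by lra. subst u2 v2.
      rewrite !Cp_1 by lra. rewrite (Cp_sym r u1 1), Cp_1 by lra.
      assert (HH := Cp_geW r u1 v1 ltac:(lra) ltac:(lra) ltac:(lra)). lra.
Qed.
Lemma sd_pos u v : 0 < u < 1 -> 0 < v < 1 -> 0 < sd u v.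
Proof.
  intros. unfold sd. apply sqrt_lt_R0.
  repeat apply Rmult_lt_0_compat; lra.
Qed.

Lemma div_le_l a b s : 0 < s -> a / s <= b -> a <= b * s.
Proof.
  intros Hs H. replace a with ((a/s)*s) by (field; lra). apply Rmult_le_compat_r; lra.
Qed.
Lemma div_le_r a b s : 0 < s -> b <= a / s -> b * s <= a.
Proof.
  intros Hs H. replace a with ((a/s)*s) by (field; lra). apply Rmult_le_compat_r; lra.
Qed.
Lemma div_neg a s : 0 < s -> a < 0 -> a / s < 0.
Proof.
  intros. unfold Rdiv. assert (0 < / s) by (apply Rinv_0_lt_compat; lra). nra.
Qed.
Lemma div_posit a s : 0 < s -> 0 < a -> 0 < a / s.
Proof.
  intros. unfold Rdiv. assert (0 < / s) by (apply Rinv_0_lt_compat; lra). nra.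
Qed.

Lemma W_lt u v : 0 < u < 1 -> 0 < v < 1 -> Rmax (u+v-1) 0 - u*v < 0.
Proof. intros. unfold Rmax; destruct (Rle_dec (u+v-1) 0); nra. Qed.
Lemma M_gt u v : 0 < u < 1 -> 0 < v < 1 -> 0 < Rmin u v - u*v.
Proof. intros. unfold Rmin; destruct (Rle_dec u v); nra. Qed.

Lemma sd_flip u v : sd (1-u) v = sd u v.
Proof. unfold sd. f_equal. ring. Qed.

Lemma Crho_pos rho u v : 0 <= rho <= 1 -> 0 <= u <= 1 -> 0 <= v <= 1 ->
  Crho rho u v = Cp rho u v.
Proof.
  intros Hr Hu Hv. unfold Crho.
  destruct (Req_EM_T u 0). { subst. rewrite Cp_ab; [ring|lra|lra|apply sd_zero_u0]. }
  destruct (Req_EM_T u 1). { subst. rewrite Cp_ab; [ring|lra|lra|apply sd_zero_u1]. }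
  destruct (Req_EM_T v 0). { subst. rewrite Cp_ab; [ring|lra|lra|apply sd_zero_v0]. }
  destruct (Req_EM_T v 1). { subst. rewrite Cp_ab; [ring|lra|lra|apply sd_zero_v1]. }
  assert (Hu' : 0 < u < 1) by lra. assert (Hv' : 0 < v < 1) by lra.
  assert (Hs := sd_pos u v Hu' Hv').
  assert (Hlo : rho_lo u v < 0) by (apply div_neg; [lra| apply W_lt; auto]).
  destruct (Rle_dec rho (rho_lo u v)). { lra. }
  destruct (Rle_dec (rho_hi u v) rho) as [h|h].
  - apply div_le_l in h; [|lra]. unfold Cp, M. symmetry. apply Rmin_left. lra.
  - assert (rho < rho_hi u v) by lra.
    assert (rho * sd u v < Rmin u v - u*v).
    { unfold rho_hi in H. replace (Rmin u v - u*v) with ((Rmin u v - u*v)/sd u v * sd u v)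
        by (field; lra). apply Rmult_lt_compat_r; lra. }
    unfold Cp, M. symmetry. apply Rmin_right. lra.
Qed.

Lemma Rmax_flip u v a : Rmax (u+v-1) 0 = v - Rmin (1-u) v /\
  (a <= Rmax (u+v-1) 0 -> Rmax (u+v-1) 0 = v - Rmin (Rmin (1-u) v) (v - a)) /\
  (Rmax (u+v-1) 0 < a -> a = v - Rmin (Rmin (1-u) v) (v - a)).
Proof.
  unfold Rmax, Rmin. repeat split; intros;
  repeat match goal with |- context [Rle_dec ?x ?y] => destruct (Rle_dec x y)
  | H : context [Rle_dec ?x ?y] |- _ => destruct (Rle_dec x y) end; lra.
Qed.

Lemma Crho_neg rho u v : -1 <= rho <= 0 -> 0 <= u <= 1 -> 0 <= v <= 1 ->
  Crho rho u v = v - Cp (-rho) (1-u) v.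
Proof.
  intros Hr Hu Hv. unfold Crho.
  destruct (Req_EM_T u 0). { subst. rewrite Cp_ab; [ring|lra|lra|]. replace (1-0) with 1 by ring. apply sd_zero_u1. }
  destruct (Req_EM_T u 1). { subst. rewrite Cp_ab; [ring|lra|lra|]. replace (1-1) with 0 by ring. apply sd_zero_u0. }
  destruct (Req_EM_T v 0). { subst. rewrite Cp_ab; [ring|lra|lra|apply sd_zero_v0]. }
  destruct (Req_EM_T v 1). { subst. rewrite Cp_ab; [ring|lra|lra|apply sd_zero_v1]. }
  assert (Hu' : 0 < u < 1) by lra. assert (Hv' : 0 < v < 1) by lra.
  assert (Hs := sd_pos u v Hu' Hv').
  assert (Hhi : 0 < rho_hi u v) by (apply div_posit; [lra| apply M_gt; auto]).
  unfold Cp, M. rewrite sd_flip.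
  replace ((1 - u) * v + - rho * sd u v) with (v - (u*v + rho * sd u v)) by ring.
  destruct (Rle_dec rho (rho_lo u v)) as [h|h].
  - apply div_le_r in h; [|lra]. unfold W. apply (Rmax_flip u v). lra.
  - destruct (Rle_dec (rho_hi u v) rho). { lra. }
    assert (rho_lo u v < rho) by lra.
    assert (Rmax (u + v - 1) 0 - u*v < rho * sd u v).
    { unfold rho_lo in H. replace (Rmax (u + v - 1) 0 - u*v) with ((Rmax (u + v - 1) 0 - u*v)/sd u v * sd u v)
        by (field; lra). apply Rmult_lt_compat_r; lra. }
    apply (Rmax_flip u v). lra.
Qed.

Lemma Cp1 a b : 0 <= a <= 1 -> 0 <= b <= 1 -> Cp 1 a b = M a b.
Proof.
  intros Ha Hb. unfold Cp. apply Rmin_left. rewrite Rmult_1_l.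
  assert (M a b - a*b <= sd a b).
  { unfold M, sd, Rmin. destruct (Rle_dec a b).
    - assert (0 <= a*(1-b)) by nra.
      replace (a - a*b) with (a*(1-b)) by ring.
      rewrite <- (sqrt_pow2 (a*(1-b))) by lra. apply sqrt_le_1_alt.
      assert (0 <= a*(1-b)*(b-a)) by (apply Rmult_le_pos; lra). nra.
    - assert (0 <= b*(1-a)) by nra.
      replace (b - a*b) with (b*(1-a)) by ring.
      rewrite <- (sqrt_pow2 (b*(1-a))) by lra. apply sqrt_le_1_alt.
      assert (0 <= b*(1-a)*(a-b)) by (apply Rmult_le_pos; lra). nra. }
  lra.
Qed.

Theorem mainTheorem2 :
  (forall rho : R, -1 <= rho <= 1 -> is_copula (Crho rho)) /\
  (forall u v : R, 0 <= u <= 1 -> 0 <= v <= 1 ->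
     Crho (-1) u v = W u v /\ Crho 0 u v = u * v /\ Crho 1 u v = M u v).
Proof.
  split.
  - intros rho Hr. unfold is_copula. repeat split.
    + intros v Hv. unfold Crho. destruct (Req_EM_T 0 0); [ring|congruence].
    + intros u Hu. unfold Crho.
      destruct (Req_EM_T u 0); [ring|]. destruct (Req_EM_T u 1); [ring|].
      destruct (Req_EM_T 0 0); [ring|congruence].
    + intros u Hu. unfold Crho.
      destruct (Req_EM_T u 0); [ring|]. destruct (Req_EM_T u 1); [ring|].
      destruct (Req_EM_T 1 0); [ring|]. destruct (Req_EM_T 1 1); [ring|congruence].
    + intros v Hv. unfold Crho.
      destruct (Req_EM_T 1 0); [lra|]. destruct (Req_EM_T 1 1); [ring|congruence].
    + intros u1 u2 v1 v2 H1 H2 H3 H4 H5 H6.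
      destruct (Rle_dec 0 rho).
      * rewrite !Crho_pos by lra. apply rectCp; lra.
      * rewrite !Crho_neg by lra.
        assert (HH := rectCp (-rho) (1-u2) (1-u1) v1 v2 ltac:(lra) ltac:(lra) ltac:(lra)
                  ltac:(lra) H4 H5 H6). lra.
  - intros u v Hu Hv. split; [|split].
    + rewrite Crho_neg by lra. replace (- -1) with 1 by ring. rewrite Cp1 by lra.
      unfold W, M. symmetry. apply (Rmax_flip u v 0).
    + rewrite Crho_pos by lra. apply Cp0; lra.
    + rewrite Crho_pos by lra. apply Cp1; lra.
Qed.
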